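(* Let $f,g,h$ satisfy the hypotheses of either (I) or (II) below, and define for $x\neq y$ in $(0,1]$ $$L(x,y)=\frac{(f(x)^2-f(y)^2)(g(x)^2-g(y)^2)(h(x)+h(y))^2}{(f(x)g(x)h(x)-f(y)g(y)h(y))^2}.$$ Then $L(x,y)\ge 16\,\beta(f,g,h)$ for all $x\neq y$ in $(0,1]$. (I): $(f,g)$ and $(f,h)$ are CLI monotone pairs and $1+\frac{G(y)-G(x)}{F(y)-F(x)}\le \frac{H(y)-H(x)}{F(y)-F(x)}$ for all $x<y$. (II): $(f,g)$ is a CLI monotone pair, $(f,h)$ is a CLI anti-monotone pair and $1+\frac{G(y)-G(x)}{F(y)-F(x)}+\frac{H(y)-H(x)}{F(y)-F(x)}\ge 0$ for all $x<y$.
   Context: $f,g,h$ are nonnegative continuous functions on $[0,1]$, differentiable on $(0,1)$, positive on $(0,1]$; $F=\log f$, $G=\log g$, $H=\log h$, with $F'(x)\neq0$ on $(0,1)$ and $F(x)\ne F(y)$ for $x\ne y$. A pair $(f,g)$ is a CLI monotone pair if (a) $(f(x)-f(y))(g(x)-g(y))\ge 0$ for all $x,y\in[0,1]$ and (b) $0\le \inf_{0<x<1}G'(x)/F'(x)\le\sup_{0<x<1}G'(x)/F'(x)<\infty$; it is a CLI anti-monotone pair if (a) $(f(x)-f(y))(g(x)-g(y))\le 0$ for all $x,y$ and (b) $-\infty<\inf_{0<x<1}G'(x)/F'(x)\le\sup_{0<x<1}G'(x)/F'(x)\le 0$ (analogously for $(f,h)$ with $H$ in place of $G$). With $m=\inf_{0<x<1}G'/F'$,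 $M=\sup_{0<x<1}G'/F'$, $n=\inf_{0<x<1}H'/F'$, $N=\sup_{0<x<1}H'/F'$, $$\beta(f,g,h)=\min\Big\{\frac{m}{(1+m+n)^2},\frac{m}{(1+m+N)^2},\frac{M}{(1+M+n)^2},\frac{M}{(1+M+N)^2}\Big\}.$$ *)

(* Defs.v *)
From Stdlib Require Import Reals Lra.
Open Scope R_scope.

(* Logarithms F = log f, etc. *)
Definition Lg (f : R -> R) : R -> R := fun x => ln (f x).

Definition is_inf (S : R -> Prop) (m : R) : Prop :=
  (forall r, S r -> m <= r) /\ (forall b, (forall r, S r -> b <= r) -> b <= m).
Definition is_sup (S : R -> Prop) (M : R) : Prop := is_lub S M.

Definition ratio_set (dF dG : R -> R) : R -> Prop :=
  fun r => exists x, 0 < x < 1 /\ r = dG x / dF x.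

Definition standing (f dF : R -> R) : Prop :=
  (forall x, 0 <= x <= 1 -> limit1_in f (fun t => 0 <= t <= 1) (f x) x) /\
  (forall x, 0 < x < 1 -> exists l, derivable_pt_lim f x l) /\
  (forall x, 0 <= x <= 1 -> 0 <= f x) /\
  (forall x, 0 < x <= 1 -> 0 < f x) /\
  (forall x, 0 < x < 1 -> derivable_pt_lim (Lg f) x (dF x)).

Definition CLI_monotone (f g dF dG : R -> R) : Prop :=
  (forall x y, 0 <= x <= 1 -> 0 <= y <= 1 -> (f x - f y) * (g x - g y) >= 0) /\
  exists m M, is_inf (ratio_set dF dG) m /\ is_sup (ratio_set dF dG) M /\
              0 <= m /\ m <= M.

Definition CLI_antimonotone (f g dF dG : R -> R) : Prop :=
  (forall x y, 0 <= x <= 1 -> 0 <= y <= 1 -> (f x - f y) * (g x - g y) <= 0) /\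
  exists m M, is_inf (ratio_set dF dG) m /\ is_sup (ratio_set dF dG) M /\
              m <= M /\ M <= 0.

Definition beta (m M n N : R) : R :=
  Rmin (Rmin (m / (1 + m + n) ^ 2) (m / (1 + m + N) ^ 2))
       (Rmin (M / (1 + M + n) ^ 2) (M / (1 + M + N) ^ 2)).

Definition Lfun (f g h : R -> R) (x y : R) : R :=
  ((f x ^ 2 - f y ^ 2) * (g x ^ 2 - g y ^ 2) * (h x + h y) ^ 2)
  / (f x * g x * h x - f y * g y * h y) ^ 2.

(* Main.v *)
Require Import Defs.
From Stdlib Require Import Reals.
From Stdlib Require Import Lra.
From Coquelicot Require Import Coquelicot.
Open Scope R_scope.

Definition sh u := (exp u - exp (-u))/2.
Definition ch u := (exp u + exp (-u))/2.

Lemma exp_le' u v : u <= v -> exp u <= exp v.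
Proof. intros [H|H]. left; now apply exp_increasing. subst; lra. Qed.

Lemma sh_nonneg u : 0 <= u -> 0 <= sh u.
Proof. intros H. unfold sh. assert (exp (-u) <= exp u) by (apply exp_le'; lra). lra. Qed.

Lemma sh_0 : sh 0 = 0.
Proof. unfold sh. rewrite Ropp_0. lra. Qed.

Lemma sh_opp u : sh (-u) = - sh u.
Proof. unfold sh. rewrite Ropp_involutive. lra. Qed.

Lemma ch_opp u : ch (-u) = ch u.
Proof. unfold ch. rewrite Ropp_involutive. lra. Qed.

Lemma ch_mono u v : 0 <= u <= v -> ch u <= ch v.
Proof.
  intros [H1 H2]. unfold ch. rewrite !exp_Ropp.
  assert (HU : 1 <= exp u) by (rewrite <- exp_0; apply exp_le'; lra).
  assert (HV : exp u <= exp v) by (apply exp_le'; lra).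
  set (U := exp u) in *. set (V := exp v) in *.
  assert (iU : U * / U = 1) by (field; lra).
  assert (iV : V * / V = 1) by (field; lra).
  assert (pU : 0 < / U) by (apply Rinv_0_lt_compat; lra).
  assert (pV : 0 < / V) by (apply Rinv_0_lt_compat; lra).
  assert (E : / U - / V = / U * / V * (V - U)) by (field; lra).
  assert (lU : / U <= 1) by (rewrite <- Rinv_1; apply Rinv_le_contravar; lra).
  assert (lV : / V <= 1) by (rewrite <- Rinv_1; apply Rinv_le_contravar; lra).
  assert (/U * /V <= 1) by nra.
  nra.
Qed.

Lemma sh_mono a b x : 0 <= a <= b -> 0 <= x -> b * sh (a*x) <= a * sh (b*x).
Proof.
  intros Hab Hx. destruct Hx as [Hx|Hx]; [|subst; rewrite !Rmult_0_r, sh_0; lra].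
  destruct (MVT_cor2 (fun z => a * sh (b*z) - b * sh (a*z))
     (fun z => a*b*(ch (b*z) - ch (a*z))) 0 x Hx) as [c [Hc1 Hc2]].
  { intros c _. apply is_derive_Reals. unfold sh, ch. auto_derive. auto.
    change RinvImpl.Rinv with Rinv. unfold Rdiv. ring. }
  rewrite !Rmult_0_r, sh_0 in Hc1.
  assert (ch (a*c) <= ch (b*c)) by (apply ch_mono; split; nra).
  assert (0 <= a*b) by nra.
  assert (0 <= a * b * (ch (b * c) - ch (a * c)) * (x - 0)) by
    (apply Rmult_le_pos; [apply Rmult_le_pos|]; lra).
  lra.
Qed.

Lemma th_mono a b x : 0 <= a <= b -> 0 <= x ->
  a * sh (b*x) * ch (a*x) <= b * sh (a*x) * ch (b*x).
Proof.
  intros Hab Hx. destruct Hx as [Hx|Hx]; [|subst; rewrite !Rmult_0_r, sh_0; lra].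
  destruct (MVT_cor2 (fun z => b * sh (a*z) * ch (b*z) - a * sh (b*z) * ch (a*z))
     (fun z => (b*b - a*a) * sh (a*z) * sh (b*z)) 0 x Hx) as [c [Hc1 Hc2]].
  { intros c _. apply is_derive_Reals. unfold sh, ch. auto_derive. auto.
    change RinvImpl.Rinv with Rinv. unfold Rdiv. ring. }
  rewrite !Rmult_0_r, sh_0 in Hc1.
  assert (0 <= sh (a*c)) by (apply sh_nonneg; nra).
  assert (0 <= sh (b*c)) by (apply sh_nonneg; nra).
  assert (0 <= b*b - a*a) by nra.
  assert (0 <= (b*b - a*a) * sh (a*c) * sh (b*c) * (x - 0)) by
    (apply Rmult_le_pos; [apply Rmult_le_pos; [apply Rmult_le_pos|]|]; lra).
  lra.
Qed.
Lemma sh_add u v : sh (u + v) = sh u * ch v + ch u * sh v.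
Proof. unfold sh, ch. rewrite Ropp_plus_distr, !exp_plus. field. Qed.

Lemma SF_pos t r s : 0 < t -> 0 <= r -> 0 < 1+r+s -> (1+r <= s \/ s <= 0) ->
  4*r*sh((1+r+s)*t/2)^2 <= sh t * sh (r*t) * ch (s*t/2)^2 * (1+r+s)^2.
Proof.
  intros Ht Hr Hk Hcase.
  set (p := (1+r)/2). set (q := (1-r)/2). set (sg := s/2).
  assert (Hp : 0 < p) by (unfold p; lra).
  assert (I1 : sh t * sh (r*t) = sh (p*t)^2 - sh (q*t)^2).
  { unfold sh.
    assert (E1 : t = p*t + q*t) by (unfold p, q; field).
    assert (E2 : r*t = p*t + - (q*t)) by (unfold p, q; field).
    rewrite E2. rewrite E1 at 1 2.
    rewrite !Ropp_plus_distr, !exp_plus, !exp_Ropp; try rewrite !Ropp_involutive.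
    assert (0 < exp (p*t)) by apply exp_pos. assert (0 < exp (q*t)) by apply exp_pos.
    field; lra. }
  assert (E3 : (1+r+s)*t/2 = p*t + sg*t) by (unfold p, sg; field).
  assert (E4 : s*t/2 = sg*t) by (unfold sg; field).
  rewrite E3, E4, sh_add. rewrite I1.
  assert (Ib : p^2 * sh (q*t)^2 <= q^2 * sh (p*t)^2).
  { assert (Hq : Rabs q <= p) by (unfold q, p; apply Rabs_le; lra).
    assert (H := sh_mono (Rabs q) p t (conj (Rabs_pos q) Hq) (Rlt_le _ _ Ht)).
    assert (H0 : 0 <= sh (Rabs q * t)) by (apply sh_nonneg; apply Rmult_le_pos; [apply Rabs_pos|lra]).
    assert (Hsq : sh (q*t)^2 = sh (Rabs q * t)^2).
    { unfold Rabs; destruct (Rcase_abs q).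
      - replace (- q * t) with (- (q*t)) by ring. rewrite sh_opp. ring.
      - reflexivity. }
    assert (Hq2 : q^2 = Rabs q ^2) by (rewrite <- Rsqr_pow2; rewrite <- Rsqr_pow2, Rsqr_abs; reflexivity).
    rewrite Hsq, Hq2.
    assert (0 <= p * sh (Rabs q * t)) by (apply Rmult_le_pos; lra).
    nra. }
  assert (Ic0 : sg * sh (p*t) * ch (sg*t) >= p * ch (p*t) * sh (sg*t)).
  { destruct Hcase as [Hc|Hc].
    - assert (Hps : 0 <= p <= sg) by (unfold p, sg; lra).
      assert (H := th_mono p sg t Hps (Rlt_le _ _ Ht)).
      nra.
    - set (tau := - sg).
      assert (Ht1 : 0 <= tau <= p) by (unfold tau, sg, p; lra).
      assert (H := th_mono tau p t Ht1 (Rlt_le _ _ Ht)).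
      replace (sg * t) with (- (tau * t)) by (unfold tau; ring).
      rewrite sh_opp, ch_opp. replace sg with (- tau) by (unfold tau; ring). nra. }
  assert (Hc1 : 0 <= sh (p*t) * ch (sg*t) + ch (p*t) * sh (sg*t)).
  { rewrite <- sh_add. apply sh_nonneg. rewrite <- E3. assert (0 < (1+r+s)*t) by (apply Rmult_lt_0_compat; lra). lra. }
  assert (Ic : p * (sh (p*t) * ch (sg*t) + ch (p*t) * sh (sg*t))
               <= (p+sg) * sh (p*t) * ch (sg*t)) by lra.
  assert (Ic2 : (p * (sh (p*t) * ch (sg*t) + ch (p*t) * sh (sg*t)))^2
               <= ((p+sg) * sh (p*t) * ch (sg*t))^2).
  { apply pow_incr. split; [apply Rmult_le_pos; lra | exact Ic]. }
  set (A := sh (p*t)) in *. set (B := sh (q*t)) in *. set (C := ch (sg*t)) in *.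
  set (D := sh (p*t) * ch (sg*t) + ch (p*t) * sh (sg*t)) in *.
  assert (Hr2 : r = p^2 - q^2) by (unfold p, q; field).
  assert (Hk2 : 1 + r + s = 2 * (p + sg)) by (unfold p, sg; field).
  rewrite Hk2.
  apply Rmult_le_reg_l with (p^2). nra.
  assert (X1 : p^2 * (A^2 - B^2) >= r * A^2) by (rewrite Hr2; nra).
  assert (X2 : 0 <= C^2 * (2*(p+sg))^2) by (apply Rmult_le_pos; apply pow2_ge_0).
  assert (X3 : p^2 * (A^2 - B^2) * (C^2 * (2*(p+sg))^2) >= r*A^2 * (C^2 * (2*(p+sg))^2)) by
    (apply Rmult_ge_compat_r; lra).
  assert (X4 : 4 * r * (p^2 * D^2) <= 4 * r * ((p + sg) * A * C) ^ 2) by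
    (apply Rmult_le_compat_l; [lra|]; replace (p^2*D^2) with ((p*D)^2) by ring; exact Ic2).
  replace (p ^ 2 * (4 * r * D ^ 2)) with (4 * r * (p ^ 2 * D ^ 2)) by ring.
  replace (p ^ 2 * ((A ^ 2 - B ^ 2) * C ^ 2 * (2 * (p + sg)) ^ 2))
    with (p ^ 2 * (A ^ 2 - B ^ 2) * (C ^ 2 * (2 * (p + sg)) ^ 2)) by ring.
  replace (r * A ^ 2 * (C ^ 2 * (2 * (p + sg)) ^ 2)) with (4 * r * ((p + sg) * A * C) ^ 2) in X3 by ring.
  unfold D in X4. fold A C in X4. lra.
Qed.

Lemma SF t r s : t <> 0 -> 0 <= r -> 0 < 1+r+s -> (1+r <= s \/ s <= 0) ->
  4*r*sh((1+r+s)*t/2)^2 <= sh t * sh (r*t) * ch (s*t/2)^2 * (1+r+s)^2.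
Proof.
  intros Ht Hr Hk Hc. destruct (Rlt_or_le 0 t) as [Hp|Hn].
  - now apply SF_pos.
  - assert (H := SF_pos (-t) r s ltac:(lra) Hr Hk Hc).
    replace ((1+r+s)*(-t)/2) with (-((1+r+s)*t/2)) in H by field.
    replace (r*(-t)) with (-(r*t)) in H by ring.
    replace (s*(-t)/2) with (-(s*t/2)) in H by field.
    rewrite !sh_opp, ch_opp in H. nra.
Qed.

Lemma Main t r s : t <> 0 -> 0 <= r -> 0 < 1+r+s -> (1+r <= s \/ s <= 0) ->
  16 * r * (exp t * exp (r*t) * exp (s*t) - 1)^2 <=
  (exp t ^2 - 1) * (exp (r*t) ^2 - 1) * (exp (s*t) + 1)^2 * (1+r+s)^2.
Proof.
  intros Ht Hr Hk Hc. assert (H := SF t r s Ht Hr Hk Hc).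
  unfold sh, ch in H. rewrite !exp_Ropp in H.
  assert (EW : exp (s*t) = exp (s*t/2) ^2).
  { simpl. rewrite Rmult_1_r, <- exp_plus. f_equal. field. }
  assert (EV : exp t * exp (r*t) * exp (s*t/2)^2 = exp ((1+r+s)*t/2)^2).
  { simpl. rewrite !Rmult_1_r, <- !exp_plus. f_equal. field. }
  rewrite EW.
  set (X := exp t) in *. set (Y := exp (r*t)) in *. set (W := exp (s*t/2)) in *.
  set (V := exp ((1+r+s)*t/2)) in *. set (k := 1+r+s) in *.
  assert (0 < X) by apply exp_pos. assert (0 < Y) by apply exp_pos.
  assert (0 < W) by apply exp_pos. assert (0 < V) by apply exp_pos.
  rewrite EV.
  replace (16 * r * (V^2 - 1)^2) with (16 * V^2 * (4 * r * ((V - / V) / 2) ^ 2)) by (field; lra).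
  replace ((X ^ 2 - 1) * (Y ^ 2 - 1) * (W ^ 2 + 1) ^ 2 * k ^ 2) with
    (16 * (X*Y*W^2) * ((X - / X) / 2 * ((Y - / Y) / 2) * ((W + / W) / 2) ^ 2 * k ^ 2)) by (field; lra).
  rewrite EV. apply Rmult_le_compat_l; [|exact H].
  assert (0 < V^2) by (apply pow_lt; lra). lra.
Qed.

Lemma div_sq0 a : a / 0^2 = 0.
Proof. unfold Rdiv. simpl. rewrite Rmult_0_l, Rinv_0. ring. Qed.

Lemma psi q m r M : 0 <= r -> m <= r <= M -> 1+r+q <> 0 ->
  Rmin (m/(1+m+q)^2) (M/(1+M+q)^2) <= r/(1+r+q)^2.
Proof.
  intros Hr [H1 H2] Hz.
  assert (HR : 0 < (1+r+q)^2) by (apply pow2_gt_0; auto).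
  assert (Hx : 0 <= r/(1+r+q)^2) by (apply Rmult_le_pos; [lra| left; apply Rinv_0_lt_compat; lra]).
  destruct (Req_dec (1+m+q) 0) as [E|E].
  { rewrite E, div_sq0. eapply Rle_trans. apply Rmin_l. lra. }
  destruct (Req_dec (1+M+q) 0) as [E'|E'].
  { rewrite E', div_sq0. eapply Rle_trans. apply Rmin_r. lra. }
  assert (HA : 0 < (1+m+q)^2) by (apply pow2_gt_0; auto).
  assert (HB : 0 < (1+M+q)^2) by (apply pow2_gt_0; auto).
  destruct (Rle_or_lt (m/(1+m+q)^2) (r/(1+r+q)^2)) as [L1|L1].
  { eapply Rle_trans. apply Rmin_l. exact L1. }
  destruct (Rle_or_lt (M/(1+M+q)^2) (r/(1+r+q)^2)) as [L2|L2].
  { eapply Rle_trans. apply Rmin_r. exact L2. }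
  exfalso.
  assert (K1 : r * (1+m+q)^2 < m * (1+r+q)^2).
  { replace (r * (1+m+q)^2) with (r/(1+r+q)^2 * ((1+m+q)^2 * (1+r+q)^2)) by (field; lra).
    replace (m * (1+r+q)^2) with (m/(1+m+q)^2 * ((1+m+q)^2 * (1+r+q)^2)) by (field; lra).
    apply Rmult_lt_compat_r; [apply Rmult_lt_0_compat|]; lra. }
  assert (K2 : r * (1+M+q)^2 < M * (1+r+q)^2).
  { replace (r * (1+M+q)^2) with (r/(1+r+q)^2 * ((1+M+q)^2 * (1+r+q)^2)) by (field; lra).
    replace (M * (1+r+q)^2) with (M/(1+M+q)^2 * ((1+M+q)^2 * (1+r+q)^2)) by (field; lra).
    apply Rmult_lt_compat_r; [apply Rmult_lt_0_compat|]; lra. }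
  set (c := 1+q).
  assert (F1 : (r - m) * (c^2 - r*m) < 0).
  { replace ((r - m) * (c^2 - r*m)) with (r * (1+m+q)^2 - m * (1+r+q)^2) by (unfold c; ring). lra. }
  assert (F2 : (M - r) * (c^2 - r*M) > 0).
  { replace ((M - r) * (c^2 - r*M)) with (M * (1+r+q)^2 - r * (1+M+q)^2) by (unfold c; ring). lra. }
  assert (G1 : c^2 - r*m < 0).
  { destruct (Rle_or_lt 0 (c^2 - r*m)); [|auto]. assert (0 <= (r-m)*(c^2-r*m)) by (apply Rmult_le_pos; lra). lra. }
  assert (G2 : c^2 - r*M > 0).
  { destruct (Rle_or_lt (c^2 - r*M) 0); [|auto]. assert ((M-r)*(c^2-r*M) <= 0) by (apply Rmult_le_0_l; lra). lra. }
  nra.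
Qed.

Lemma conv_q c s n N : n <= s <= N -> (c+s)^2 <= (c+n)^2 \/ (c+s)^2 <= (c+N)^2.
Proof.
  intros H. destruct (Rle_or_lt ((c+s)^2) ((c+n)^2)); [now left|].
  destruct (Rle_or_lt ((c+s)^2) ((c+N)^2)); [now right|]. exfalso.
  assert (E1 : (s-n)*(2*c+s+n) > 0) by (replace ((s-n)*(2*c+s+n)) with ((c+s)^2-(c+n)^2) by ring; lra).
  assert (E2 : (N-s)*(2*c+s+N) < 0) by (replace ((N-s)*(2*c+s+N)) with ((c+N)^2-(c+s)^2) by ring; lra).
  assert (G1 : 2*c+s+n > 0).
  { destruct (Rle_or_lt (2*c+s+n) 0); [|auto]. assert ((s-n)*(2*c+s+n) <= 0) by (apply Rmult_le_0_l; lra). lra. }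
  assert (G2 : 2*c+s+N < 0).
  { destruct (Rle_or_lt 0 (2*c+s+N)); [|auto]. assert (0 <= (N-s)*(2*c+s+N)) by (apply Rmult_le_pos; lra). lra. }
  lra.
Qed.

Lemma beta_bound m M n N r s : m <= r <= M -> n <= s <= N -> 0 <= r -> 1+r+s <> 0 ->
  beta m M n N <= r/(1+r+s)^2.
Proof.
  intros Hr Hs Hr0 Hk. unfold beta.
  assert (HK : 0 < (1+r+s)^2) by (apply pow2_gt_0; auto).
  destruct (conv_q (1+r) s n N Hs) as [C|C].
  - assert (Hz : 1+r+n <> 0).
    { intro E. rewrite E in C. simpl in C. lra. }
    assert (P := psi n m r M Hr0 Hr Hz).
    assert (Q : r/(1+r+n)^2 <= r/(1+r+s)^2).
    { unfold Rdiv. apply Rmult_le_compat_l; auto. apply Rinv_le_contravar; lra. }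
    apply Rle_trans with (Rmin (m / (1 + m + n) ^ 2) (M / (1 + M + n) ^ 2)); [|lra].
    apply Rmin_glb.
    + eapply Rle_trans. apply Rmin_l. apply Rmin_l.
    + eapply Rle_trans. apply Rmin_r. apply Rmin_l.
  - assert (Hz : 1+r+N <> 0).
    { intro E. rewrite E in C. simpl in C. lra. }
    assert (P := psi N m r M Hr0 Hr Hz).
    assert (Q : r/(1+r+N)^2 <= r/(1+r+s)^2).
    { unfold Rdiv. apply Rmult_le_compat_l; auto. apply Rinv_le_contravar; lra. }
    apply Rle_trans with (Rmin (m / (1 + m + N) ^ 2) (M / (1 + M + N) ^ 2)); [|lra].
    apply Rmin_glb.
    + eapply Rle_trans. apply Rmin_l. apply Rmin_r.
    + eapply Rle_trans. apply Rmin_r. apply Rmin_r.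
Qed.

Lemma clamp_cont f dF a b c : standing f dF -> 0 < a -> a <= c <= b -> b <= 1 ->
  continuity_pt (fun z => Lg f (Rmin z b)) c.
Proof.
  intros [Hc [_ [_ [Hpos _]]]] Ha Hcb Hb.
  assert (Hf : continuity_pt (fun z => f (Rmin z b)) c).
  { intros eps Heps.
    destruct (Hc c ltac:(lra) eps Heps) as [alp [Halp H]].
    exists (Rmin alp a). split. { apply Rmin_pos; lra. }
    intros z [_ Hz]. simpl in Hz |- *. unfold R_dist in *.
    assert (Hz1 : Rabs (z - c) < alp) by (eapply Rlt_le_trans; [exact Hz| apply Rmin_l]).
    assert (Hz2 : Rabs (z - c) < a) by (eapply Rlt_le_trans; [exact Hz| apply Rmin_r]).
    rewrite (Rmin_left c b) by lra.
    apply H. split.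
    - apply Rabs_def2 in Hz2. unfold Rmin; destruct (Rle_dec z b); lra.
    - simpl. unfold R_dist. apply Rabs_def2 in Hz1. apply Rabs_def1; unfold Rmin; destruct (Rle_dec z b); lra. }
  assert (Hp : 0 < f (Rmin c b)) by (apply Hpos; unfold Rmin; destruct (Rle_dec c b); lra).
  apply (continuity_pt_comp (fun z => f (Rmin z b)) ln c Hf).
  apply derivable_continuous_pt. exists (/ f (Rmin c b)). now apply derivable_pt_lim_ln.
Qed.

Lemma clamp_deriv f dF b c : standing f dF -> 0 < c < b -> b <= 1 ->
  derivable_pt_lim (fun z => Lg f (Rmin z b)) c (dF c).
Proof.
  intros [_ [_ [_ [_ Hd]]]] Hcb Hb.
  apply is_derive_Reals. apply is_derive_ext_loc with (f := Lg f).
  - assert (He : 0 < b - c) by lra.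
    exists (mkposreal _ He). intros y Hy. simpl in Hy.
    unfold ball in Hy; simpl in Hy; unfold AbsRing_ball, abs, minus, plus, opp in Hy; simpl in Hy.
    apply Rabs_def2 in Hy. rewrite Rmin_left by lra. reflexivity.
  - apply is_derive_Reals. apply Hd. lra.
Qed.

Lemma ratio_mem f g dF dG a b : standing f dF -> standing g dG ->
  (forall x, 0 < x < 1 -> dF x <> 0) -> 0 < a -> a < b -> b <= 1 ->
  Lg f b - Lg f a <> 0 ->
  ratio_set dF dG ((Lg g b - Lg g a) / (Lg f b - Lg f a)).
Proof.
  intros Sf Sg HdF Ha Hab Hb Hne.
  set (F := fun z => Lg f (Rmin z b)). set (G := fun z => Lg g (Rmin z b)).
  assert (pr1 : forall c, a < c < b -> derivable_pt F c).
  { intros c Hc. exists (dF c). apply (clamp_deriv f dF b c Sf); lra. }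
  assert (pr2 : forall c, a < c < b -> derivable_pt G c).
  { intros c Hc. exists (dG c). apply (clamp_deriv g dG b c Sg); lra. }
  destruct (MVT F G a b pr1 pr2 Hab) as [c [P Hc]].
  { intros c Hc. apply (clamp_cont f dF a b c Sf); lra. }
  { intros c Hc. apply (clamp_cont g dG a b c Sg); lra. }
  rewrite (derive_pt_eq_0 F c (dF c) (pr1 c P)) in Hc by (apply (clamp_deriv f dF b c Sf); lra).
  rewrite (derive_pt_eq_0 G c (dG c) (pr2 c P)) in Hc by (apply (clamp_deriv g dG b c Sg); lra).
  unfold F, G in Hc. rewrite (Rmin_left b b), (Rmin_left a b) in Hc by lra.
  exists c. split. lra.
  assert (dF c <> 0) by (apply HdF; lra).
  field_simplify_eq; auto. lra.
Qed.

Lemma exp_Lg f x : 0 < f x -> f x = exp (Lg f x).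
Proof. intros H. unfold Lg. now rewrite exp_ln. Qed.

Lemma ordered (f g h dF dG dH : R -> R) (m M n N : R) :
  standing f dF -> standing g dG -> standing h dH ->
  (forall x, 0 < x < 1 -> dF x <> 0) ->
  (forall x y, 0 < x <= 1 -> 0 < y <= 1 -> x <> y -> Lg f x <> Lg f y) ->
  is_inf (ratio_set dF dG) m -> is_sup (ratio_set dF dG) M ->
  is_inf (ratio_set dF dH) n -> is_sup (ratio_set dF dH) N ->
  ( (CLI_monotone f g dF dG /\ CLI_monotone f h dF dH /\
     forall x y, 0 < x <= 1 -> 0 < y <= 1 -> x < y ->
       1 + (Lg g y - Lg g x) / (Lg f y - Lg f x)
         <= (Lg h y - Lg h x) / (Lg f y - Lg f x))
  \/ (CLI_monotone f g dF dG /\ CLI_antimonotone f h dF dH /\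
     forall x y, 0 < x <= 1 -> 0 < y <= 1 -> x < y ->
       1 + (Lg g y - Lg g x) / (Lg f y - Lg f x)
         + (Lg h y - Lg h x) / (Lg f y - Lg f x) >= 0) ) ->
  forall x y, 0 < x <= 1 -> 0 < y <= 1 -> x < y ->
    f x * g x * h x - f y * g y * h y <> 0 ->
    Lfun f g h x y >= 16 * beta m M n N.
Proof.
  intros Sf Sg Sh HdF Hinj Him HsM Hin HsN Hcase a b Ha Hb Hab Hprod.
  assert (Ht : Lg f b - Lg f a <> 0).
  { intro E. apply (Hinj a b Ha Hb); lra. }
  set (t := Lg f b - Lg f a) in *.
  set (r := (Lg g b - Lg g a) / t).
  set (s := (Lg h b - Lg h a) / t).
  assert (Rr : ratio_set dF dG r) by (apply ratio_mem; auto; lra).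
  assert (Rs : ratio_set dF dH s) by (apply ratio_mem; auto; lra).
  assert (Hr : m <= r <= M) by (split; [apply (proj1 Him) | apply (proj1 HsM)]; auto).
  assert (Hs : n <= s <= N) by (split; [apply (proj1 Hin) | apply (proj1 HsN)]; auto).
  assert (Hr0 : 0 <= r).
  { destruct Hcase as [[[_ [m' [M' [Hm' [_ [H0 _]]]]]] _] | [[_ [m' [M' [Hm' [_ [H0 _]]]]]] _]];
    apply Rle_trans with m'; auto; apply (proj1 Hm'); auto. }
  assert (Hcond : (1 + r <= s /\ 0 <= 1 + r + s) \/ (s <= 0 /\ 0 <= 1 + r + s)).
  { destruct Hcase as [[_ [_ H]] | [_ [[_ [m' [M' [_ [HM' [_ H0]]]]]] H]]].
    - left. specialize (H a b Ha Hb Hab). fold t in H. fold r s in H. lra.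
    - right. specialize (H a b Ha Hb Hab). fold t in H. fold r s in H.
      assert (s <= M') by (apply (proj1 HM'); auto). lra. }
  destruct Sf as (Sf1 & Sf2 & Sf3 & Sfp & Sf5).
  destruct Sg as (Sg1 & Sg2 & Sg3 & Sgp & Sg5).
  destruct Sh as (Sh1 & Sh2 & Sh3 & Shp & Sh5).
  assert (Efa := exp_Lg f a (Sfp a Ha)). assert (Efb := exp_Lg f b (Sfp b Hb)).
  assert (Ega := exp_Lg g a (Sgp a Ha)). assert (Egb := exp_Lg g b (Sgp b Hb)).
  assert (Eha := exp_Lg h a (Shp a Ha)). assert (Ehb := exp_Lg h b (Shp b Hb)).
  assert (Efb' : f b = f a * exp t).
  { rewrite Efb, Efa, <- exp_plus. f_equal. unfold t. ring. }
  assert (Egb' : g b = g a * exp (r*t)).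
  { rewrite Egb, Ega, <- exp_plus. f_equal. unfold r. field. auto. }
  assert (Ehb' : h b = h a * exp (s*t)).
  { rewrite Ehb, Eha, <- exp_plus. f_equal. unfold s. field. auto. }
  assert (PA := Sfp a Ha). assert (PB := Sgp a Ha). assert (PC := Shp a Ha).
  clearbody r s t.
  unfold Lfun. rewrite Efb', Egb', Ehb' in *.
  set (A := f a) in *. set (B := g a) in *. set (C := h a) in *.
  set (X := exp t) in *. set (Y := exp (r*t)) in *. set (Z := exp (s*t)) in *.
  assert (HE : X * Y * Z - 1 <> 0).
  { intro E. apply Hprod. replace (A * B * C - A * X * (B * Y) * (C * Z)) with (- (A*B*C) * (X*Y*Z - 1)) by ring.
    rewrite E. ring. }
  assert (Hk : 1 + r + s <> 0).
  { intro E. apply HE. unfold X, Y, Z. rewrite <- !exp_plus.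
    replace (t + r * t + s * t) with ((1 + r + s) * t) by ring. rewrite E, Rmult_0_l, exp_0. ring. }
  assert (Hk0 : 0 < 1 + r + s) by (destruct Hcond; lra).
  assert (Hc' : 1 + r <= s \/ s <= 0) by (destruct Hcond; [left|right]; tauto).
  assert (Hm := Main t r s Ht Hr0 Hk0 Hc'). fold X Y Z in Hm.
  assert (Hbeta := beta_bound m M n N r s Hr Hs Hr0 Hk).
  replace ((A ^ 2 - (A * X) ^ 2) * (B ^ 2 - (B * Y) ^ 2) * (C + C * Z) ^ 2 /
            (A * B * C - A * X * (B * Y) * (C * Z)) ^ 2)
    with ((X ^ 2 - 1) * (Y ^ 2 - 1) * (Z + 1) ^ 2 / (X * Y * Z - 1) ^ 2).
  2: { field. repeat split; auto. }
  assert (HK2 : 0 < (1 + r + s)^2) by (apply pow_lt; lra).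
  assert (HE2 : 0 < (X*Y*Z - 1)^2) by (apply pow2_gt_0; auto).
  apply Rle_ge. apply Rle_trans with (16 * (r / (1 + r + s)^2)). lra.
  replace (16 * (r / (1 + r + s) ^ 2)) with ((16 * r * (X*Y*Z-1)^2) / ((1+r+s)^2 * (X*Y*Z-1)^2)) by (field; lra).
  replace ((X ^ 2 - 1) * (Y ^ 2 - 1) * (Z + 1) ^ 2 / (X * Y * Z - 1) ^ 2) with
    (((X ^ 2 - 1) * (Y ^ 2 - 1) * (Z + 1) ^ 2 * (1+r+s)^2) / ((1+r+s)^2 * (X*Y*Z-1)^2)) by (field; lra).
  unfold Rdiv. apply Rmult_le_compat_r; [|exact Hm].
  left. apply Rinv_0_lt_compat. apply Rmult_lt_0_compat; auto.
Qed.

Theorem proposition4p1 (f g h dF dG dH : R -> R) (m M n N : R) :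
  standing f dF -> standing g dG -> standing h dH ->
  (forall x, 0 < x < 1 -> dF x <> 0) ->
  (forall x y, 0 < x <= 1 -> 0 < y <= 1 -> x <> y -> Lg f x <> Lg f y) ->
  is_inf (ratio_set dF dG) m -> is_sup (ratio_set dF dG) M ->
  is_inf (ratio_set dF dH) n -> is_sup (ratio_set dF dH) N ->
  ( (* (I) *)
    (CLI_monotone f g dF dG /\ CLI_monotone f h dF dH /\
     forall x y, 0 < x <= 1 -> 0 < y <= 1 -> x < y ->
       1 + (Lg g y - Lg g x) / (Lg f y - Lg f x)
         <= (Lg h y - Lg h x) / (Lg f y - Lg f x))
  \/ (* (II) *)
    (CLI_monotone f g dF dG /\ CLI_antimonotone f h dF dH /\
     forall x y, 0 < x <= 1 -> 0 < y <= 1 -> x < y ->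
       1 + (Lg g y - Lg g x) / (Lg f y - Lg f x)
         + (Lg h y - Lg h x) / (Lg f y - Lg f x) >= 0) ) ->
  forall x y, 0 < x <= 1 -> 0 < y <= 1 -> x <> y ->
    f x * g x * h x - f y * g y * h y <> 0 ->
    Lfun f g h x y >= 16 * beta m M n N.
Proof.
  intros Sf Sg Sh HdF Hinj Him HsM Hin HsN Hcase x y Hx Hy Hxy Hp.
  destruct (Rlt_or_le x y) as [L|L].
  - eapply ordered; eauto.
  - assert (L' : y < x) by lra.
    replace (Lfun f g h x y) with (Lfun f g h y x).
    + eapply ordered; eauto. intro E. apply Hp. lra.
    + unfold Lfun. f_equal; ring.
Qed.
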